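(* There is no nonzero $\phi\in L^2(\mathcal P,\lambda,\mathbb{R})$ with $T'(k)\phi=\phi$ (equality in $L^2$) for all $k$ in any of the following subgroups of $\mathrm{SO}(2)\times\mathrm{SO}(2)$: (1) $\mathrm{SO}(2)\times\mathrm{SO}(2)$; (2) $S^1\times C_N=\{(R(\theta),R(2\pi i/N)):\theta\in\mathbb{R},\ i\in\{0,\dots,N-1\}\}$, for any integer $N\ge 1$; (3) $C_N\times S^1=\{(R(2\pi i/N),R(\theta)):\theta\in\mathbb{R},\ i\in\{0,\dots,N-1\}\}$, for any integer $N\ge 1$; (4) $H(N,q_0,p_0)=\{(R(q_0\theta),R(p_0\theta+2\pi i/N)):\theta\in\mathbb{R},\ i\in\{0,\dots,N-1\}\}$, where $N\ge 1$ is an integer and $q_0,p_0$ are relatively prime integers with $p_0>0$, $q_0\neq 0$, and at least one of $N,q_0,p_0$ is even.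
   Context: $R(\theta)=\begin{pmatrix}\cos\theta & \sin\theta\\ -\sin\theta & \cos\theta\end{pmatrix}$. Let $P_1(\mathbb{R})=\mathbb{R}\cup\{\infty\}$ be the real projective line with projective coordinate $x$, and $\mathcal P=P_1(\mathbb{R})\times P_1(\mathbb{R})$ (a torus). Using angular coordinates $x=\cot(\rho/2)$, $y=\cot(\sigma/2)$, $\lambda$ is the measure on $\mathcal P$ invariant under $\mathrm{SO}(2)\times\mathrm{SO}(2)$ (Lebesgue measure $d\rho\,d\sigma$), and $L^2(\mathcal P,\lambda,\mathbb{R})$ is the real Hilbert space of square-integrable real functions on $\mathcal P$. For $g=\begin{pmatrix}a&b\\c&d\end{pmatrix}\in \mathrm{SL}(2,\mathbb{R})$ and $x\in P_1(\mathbb{R})$ put $xg=\frac{xa+c}{xb+d}$, $k_g(x)=\left(\frac{(xb+d)^2+(xa+c)^2}{1+x^2}\right)^{1/2}$, $s_g(x)=\frac{xb+d}{|xb+d|}$. The group $\mathrm{SL}(2,\mathbb{R})\times\mathrm{SL}(2,\mathbb{R})$ acts on $L^2(\mathcal P,\lambda,\mathbb{R})$ by $(T'(g,h)\phi)(x,y)=k_g^{-3}(x)s_g(x)k_h^{-3}(y)s_h(y)\phi(xg,yh)$. *)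

(* Defs.v *)
From HB Require Import structures.
From mathcomp Require Import all_boot all_order all_algebra.
From mathcomp Require Import all_classical all_reals all_analysis.
Set Implicit Arguments. Unset Strict Implicit. Unset Printing Implicit Defensive.
Import Order.TTheory GRing.Theory Num.Theory.
Import numFieldNormedType.Exports.
Local Open Scope classical_set_scope.
Local Open Scope ring_scope.

Section Defs.
Variable R : realType.

Definition rot (t : R) : 'M[R]_2 :=
  \matrix_(i < 2, j < 2)
    (if i == j then cos t else if (i < j)%N then sin t else - sin t).

Definition ma (g : 'M[R]_2) := g ord0 ord0.
Definition mb (g : 'M[R]_2) := g ord0 ord_max.
Definition mc (g : 'M[R]_2) := g ord_max ord0.
Definition md (g : 'M[R]_2) := g ord_max ord_max.

(* projective coordinate action x g = (xa+c)/(xb+d), in the affine chart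
   (the point where xb+d = 0 is sent anywhere: it is a lambda-null set) *)
Definition pact (g : 'M[R]_2) (x : R) : R :=
  (x * ma g + mc g) / (x * mb g + md g).

Definition kfac (g : 'M[R]_2) (x : R) : R :=
  Num.sqrt (((x * mb g + md g) ^+ 2 + (x * ma g + mc g) ^+ 2) / (1 + x ^+ 2)).

Definition sfac (g : 'M[R]_2) (x : R) : R :=
  (x * mb g + md g) / `|x * mb g + md g|.

Definition Tp (k : 'M[R]_2 * 'M[R]_2) (phi : R * R -> R) (z : R * R) : R :=
  (kfac k.1 z.1 ^+ 3)^-1 * sfac k.1 z.1 * (kfac k.2 z.2 ^+ 3)^-1 * sfac k.2 z.2
  * phi (pact k.1 z.1, pact k.2 z.2).

Definition cot (t : R) : R := cos t / sin t.

(* angular coordinates: (rho, sigma) in ]0,2pi[^2  |->  (cot(rho/2), cot(sigma/2));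
   this covers P minus the null set {x = oo} \/ {y = oo} *)
Definition ang (w : R * R) : R * R := (cot (w.1 / 2), cot (w.2 / 2)).

Definition sq : set (R * R) :=
  `]0, 2 * pi[%classic `*` `]0, 2 * pi[%classic.

Definition leb2 := (@lebesgue_measure R \x @lebesgue_measure R)%E.

Definition inL2 (phi : R * R -> R) : Prop :=
  measurable_fun setT phi /\
  (\int[leb2]_(w in sq) ((phi (ang w)) ^+ 2)%:E < +oo)%E.

Definition L2eq (phi psi : R * R -> R) : Prop :=
  ae_eq leb2 sq (fun w => phi (ang w)) (fun w => psi (ang w)).

Definition no_invariant (G : set ('M[R]_2 * 'M[R]_2)) : Prop :=
  forall phi : R * R -> R, inL2 phi ->
    (forall k, G k -> L2eq (Tp k phi) phi) -> L2eq phi (fun _ => 0).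

Definition SO2xSO2 : set ('M[R]_2 * 'M[R]_2) :=
  [set k | exists a b : R, k = (rot a, rot b)].

Definition S1xCN (N : nat) : set ('M[R]_2 * 'M[R]_2) :=
  [set k | exists (t : R) (i : nat), (i < N)%N /\
     k = (rot t, rot (2 * pi * i%:R / N%:R))].

Definition CNxS1 (N : nat) : set ('M[R]_2 * 'M[R]_2) :=
  [set k | exists (t : R) (i : nat), (i < N)%N /\
     k = (rot (2 * pi * i%:R / N%:R), rot t)].

Definition Hgrp (N : nat) (q0 p0 : int) : set ('M[R]_2 * 'M[R]_2) :=
  [set k | exists (t : R) (i : nat), (i < N)%N /\
     k = (rot (q0%:~R * t), rot (p0%:~R * t + 2 * pi * i%:R / N%:R))].

End Defs.

(* Main.v *)
Require Import Defs.
From HB Require Import structures.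
From mathcomp Require Import all_boot all_order all_algebra.
From mathcomp Require Import all_classical all_reals all_analysis.
From mathcomp Require Import ring lra.
Import Order.TTheory GRing.Theory Num.Theory.
Local Open Scope ring_scope.

Section Aux.
Variable R : realType.

Lemma key (G : set ('M[R]_2 * 'M[R]_2)) :
  (exists k, G k /\ forall phi z, Tp k phi z = - phi z) -> no_invariant G.
Proof.
move=> [k [Gk Hk]] phi _ inv.
have := inv k Gk; rewrite /L2eq /ae_eq.
apply: filterS => w + Dw => /(_ Dw); rewrite Hk => h.
lra.
Qed.

Lemma rot_pm (t x : R) : sin t = 0 -> (cos t = 1 \/ cos t = -1) ->
  [/\ pact (Defs.rot t) x = x, kfac (Defs.rot t) x = 1 & sfac (Defs.rot t) x = cos t].
Proof.
move=> s0 hc.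
have Ea : ma (Defs.rot t) = cos t by rewrite /ma /Defs.rot mxE.
have Eb : mb (Defs.rot t) = sin t by rewrite /mb /Defs.rot mxE.
have Ec : mc (Defs.rot t) = - sin t by rewrite /mc /Defs.rot mxE.
have Ed : md (Defs.rot t) = cos t by rewrite /md /Defs.rot mxE.
rewrite /pact /kfac /sfac Ea Eb Ec Ed s0 oppr0 !mulr0 !add0r !addr0.
have hx : 1 + x ^+ 2 != 0 by apply: lt0r_neq0; apply: ltr_pwDl => //; exact: sqr_ge0.
have e1 : (1 + x ^+ 2) / (1 + x ^+ 2) = 1 by rewrite divff.
case: hc => ->; split.
- by rewrite mulr1 divr1.
- by rewrite mulr1 expr1n e1 sqrtr1.
- by rewrite normr1 divr1.
- by rewrite mulrN1 divrN divr1 opprK.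
- by rewrite mulrN1 !sqrrN expr1n e1 sqrtr1.
- by rewrite normrN normr1 divr1.
Qed.

Lemma Tp_rot (a b : R) phi z : sin a = 0 -> (cos a = 1 \/ cos a = -1) ->
  sin b = 0 -> (cos b = 1 \/ cos b = -1) ->
  Tp (Defs.rot a, Defs.rot b) phi z = cos a * cos b * phi z.
Proof.
move=> sa ca sb cb; case: z => x y.
have [p1 k1 s1] := @rot_pm a x sa ca.
have [p2 k2 s2] := @rot_pm b y sb cb.
rewrite /Tp /= p1 k1 s1 p2 k2 s2 expr1n invr1 !mul1r.
by rewrite mulr1.
Qed.

Lemma natpi (n : nat) : sin (n%:R * pi) = 0 :> R /\
  cos (n%:R * pi) = (if odd n then -1 else 1) :> R.
Proof.
elim: n => [|n [IHs IHc]]; first by rewrite mul0r sin0 cos0.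
rewrite -addn1 natrD mulrDl mul1r sinDpi cosDpi IHs IHc oppr0; split => //.
by rewrite addn1 /=; case: (odd n); rewrite ?opprK.
Qed.

Lemma intpi (z : int) : sin (z%:~R * pi) = 0 :> R /\
  cos (z%:~R * pi) = (if (2 %| z)%Z then 1 else -1) :> R.
Proof.
case: z => n.
- have [h1 h2] := natpi n; rewrite h1 h2; split => //.
  by rewrite dvdzE /= dvdn2; case: (odd n).
- rewrite NegzE mulrNz mulNr sinN cosN.
  have [h1 h2] := natpi n.+1; rewrite h1 h2 oppr0; split => //.
  by rewrite dvdzE /= dvdn2 /=; case: (odd n).
Qed.


Lemma pm_of (z : int) : cos (z%:~R * pi) = 1 :> R \/ cos (z%:~R * pi) = -1 :> R.
Proof. by have [_ ->] := intpi z; case: ifP; [left|right]. Qed.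

Lemma negrot (G : set ('M[R]_2 * 'M[R]_2)) (a b : R) :
  G (Defs.rot a, Defs.rot b) -> sin a = 0 -> sin b = 0 ->
  (cos a = 1 \/ cos a = -1) -> (cos b = 1 \/ cos b = -1) ->
  cos a * cos b = -1 -> no_invariant G.
Proof.
move=> Gk sa sb ca cb e; apply: key; exists (Defs.rot a, Defs.rot b); split => //.
by move=> phi z; rewrite Tp_rot // e mulN1r.
Qed.

End Aux.
Theorem mainTheorem4 (R : realType) :
  no_invariant (@SO2xSO2 R)
  /\ (forall N : nat, (0 < N)%N -> no_invariant (@S1xCN R N))
  /\ (forall N : nat, (0 < N)%N -> no_invariant (@CNxS1 R N))
  /\ (forall (N : nat) (q0 p0 : int),
        (0 < N)%N -> coprimez q0 p0 -> 0 < p0 -> q0 != 0 ->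
        [|| ~~ odd N, (2 %| q0)%Z | (2 %| p0)%Z] ->
        no_invariant (@Hgrp R N q0 p0)).
Proof.
have ca1 : cos (pi : R) = -1 by rewrite cospi.
split; [|split; [|split]].
- apply: (@negrot R _ pi 0); rewrite ?sinpi ?sin0 ?cospi ?cos0 ?mulr1; try by [|left|right].
  by exists pi, 0.
- move=> N N0; apply: (@negrot R _ pi 0); rewrite ?sinpi ?sin0 ?cospi ?cos0 ?mulr1; try by [|left|right].
  by exists pi, 0%N; split => //; rewrite mulr0 mul0r.
- move=> N N0; apply: (@negrot R _ 0 pi); rewrite ?sinpi ?sin0 ?cospi ?cos0 ?mul1r; try by [|left|right].
  by exists pi, 0%N; split => //; rewrite mulr0 mul0r.
move=> N q0 p0 N0 cop p0pos q0n0 par.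
have [sq cq] := @intpi R q0.
have [sp cp] := @intpi R p0.
have not_both : ~~ ((2 %| q0)%Z && (2 %| p0)%Z).
  apply/negP => h; move: h; rewrite -dvdz_gcd (eqP cop) dvdzE //.
case Eq: (2 %| q0)%Z; case Ep: (2 %| p0)%Z; rewrite Eq Ep in cq cp not_both => //.
- apply: (@negrot R _ (q0%:~R * pi) (p0%:~R * pi)) => //; try exact: pm_of.
  + exists pi, 0%N; split => //; rewrite mulr0 mul0r addr0.
    by rewrite ![_ * pi]mulrC.
  + by rewrite cq cp mul1r.
- apply: (@negrot R _ (q0%:~R * pi) (p0%:~R * pi)) => //; try exact: pm_of.
  + exists pi, 0%N; split => //; rewrite mulr0 mul0r addr0.
    by rewrite ![_ * pi]mulrC.
  + by rewrite cq cp mulr1.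
- move: par; rewrite Eq Ep /= orbF => evN.
  have hN : N = (N./2).*2 by rewrite -{1}(odd_double_half N) (negbTE evN).
  apply: (@negrot R _ (q0%:~R * pi) (p0%:~R * pi + pi)).
  + exists pi, (N./2); split.
      by rewrite {2}hN -addnn -{1}(addn0 N./2) ltn_add2l; rewrite hN -addnn in N0; move: N0; case: (N./2).
    congr (_, _); congr (Defs.rot _); congr (_ + _).
    have Nn0 : (N./2)%:R != 0 :> R.
      by apply/eqP => h; move: N0; rewrite hN; move/eqP: h; rewrite pnatr_eq0 => /eqP ->.
    have -> : N%:R = (N./2)%:R * 2 :> R by rewrite {1}hN -muln2 natrM.
    by field.
  + by [].
  + by rewrite sinDpi sp oppr0.
  + exact: pm_of.
  + by rewrite cosDpi cp opprK; left.
  + by rewrite cosDpi cq cp opprK mulr1.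
Qed.
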